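(* Let $\Lambda$ be an Artin algebra, $\omega$ a $\Lambda$-module, and $M=M_1\oplus M_2$ a $\Lambda$-module. Then $\mathrm{l.app}_\omega M_1\ge\mathrm{l.app}_\omega M$.
   Context: All modules are finitely generated left modules. $\mathrm{add}\,\omega$ is the class of direct summands of finite direct sums of copies of $\omega$; a map $f:Z\to\omega_0$ with $\omega_0\in\mathrm{add}\,\omega$ is a left $\mathrm{add}\,\omega$-approximation if every map from $Z$ to a module in $\mathrm{add}\,\omega$ factors through $f$. For a module $Z$, $\mathrm{l.app}_\omega Z$ is the largest positive integer $m$ (or $\infty$) such that a complex $0\to Z\xrightarrow{f_1}\omega_1\xrightarrow{f_2}\omega_2\to\cdots$ with $\omega_i\in\mathrm{add}\,\omega$ and each $\mathrm{Im} f_i\hookrightarrow\omega_i$ a left $\mathrm{add}\,\omega$-approximation of $\mathrm{Im} f_i$ is exact up to $\omega_m$ (resp. everywhere). *)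

(* Defs.v *)
From HB Require Import structures.
From mathcomp Require Import all_boot all_order all_algebra.
Set Implicit Arguments. Unset Strict Implicit. Unset Printing Implicit Defensive.
Import GRing.Theory.
Local Open Scope ring_scope.

Definition is_ideal (K : comPzRingType) (I : K -> Prop) : Prop :=
  [/\ I 0, (forall x y, I x -> I y -> I (x + y)) & (forall a x, I x -> I (a * x))].

Definition artinian_ring (K : comPzRingType) : Prop :=
  forall I : nat -> K -> Prop,
    (forall n, is_ideal (I n)) ->
    (forall n x, I n.+1 x -> I n x) ->
    exists N, forall n, (N <= n)%N -> forall x, I n x -> I N x.

Definition artin_algebra (R : pzRingType) : Prop :=
  exists (K : comPzRingType) (phi : {rmorphism K -> R}),
    [/\ artinian_ring K,
        (forall k r, phi k * r = r * phi k) &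
        exists (n : nat) (g : 'I_n -> R),
          forall r, exists c : 'I_n -> K, r = \sum_(i < n) phi (c i) * g i].

Definition fin_gen (R : pzRingType) (V : lmodType R) : Prop :=
  exists (n : nat) (g : 'I_n -> V),
    forall v, exists c : 'I_n -> R, v = \sum_(i < n) c i *: g i.

(* X is in add W : a direct summand of a finite direct sum W^n. *)
Definition in_add (R : pzRingType) (W X : lmodType R) : Prop :=
  exists (n : nat) (s : {linear X -> {ffun 'I_n -> W}})
         (p : {linear {ffun 'I_n -> W} -> X}),
    forall x, p (s x) = x.

(* For a submodule U of O (given by a predicate P), the inclusion U -> O is a
   left add W-approximation of U: every R-linear map U -> X with X in add W
   extends along the inclusion. A linear map U -> X is encoded as a function
   O -> X whose restriction to U is R-linear (values off U irrelevant). *)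
Definition incl_left_approx (R : pzRingType) (W O : lmodType R) (P : O -> Prop)
  : Prop :=
  forall (X : lmodType R), in_add W X ->
  forall g : O -> X,
    (forall x y, P x -> P y -> g (x + y) = g x + g y) ->
    (forall (r : R) x, P x -> g (r *: x) = r *: g x) ->
    exists h : {linear O -> X}, forall x, P x -> h x = g x.

Definition img (R : pzRingType) (A B : lmodType R) (f : A -> B) : B -> Prop :=
  fun y => exists x, y = f x.

(* ker f is contained in im g, i.e. exactness at the middle term
   (given that the sequence is a complex). *)
Definition exact_at (R : pzRingType) (A B C : lmodType R)
  (g : A -> B) (f : B -> C) : Prop :=
  forall y, f y = 0 -> img g y.

(* A complex 0 -> Z --f1--> w_1 --f_2--> w_2 -> ... with w_i in add W and each
   Im f_i -> w_i a left add W-approximation of Im f_i.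
   Indexing: w_{i+1} = O i, f_1 = f1, f_{i+2} = f i : O i -> O i.+1. *)
Definition approx_complex (R : pzRingType) (W Z : lmodType R)
  (O : nat -> lmodType R) (f1 : {linear Z -> O 0%N})
  (f : forall i, {linear O i -> O i.+1}) : Prop :=
  [/\ forall i, in_add W (O i),
      (forall z, f 0%N (f1 z) = 0),
      (forall i x, f i.+1 (f i x) = 0),
      incl_left_approx W (img f1) &
      forall i, incl_left_approx W (img (f i))].

(* l.app_W Z >= m (m positive): some such complex is exact up to w_m, i.e.
   0 -> Z -> w_1 -> ... -> w_m is exact (at Z, w_1, ..., w_{m-1}). *)
Definition lapp_ge (R : pzRingType) (W Z : lmodType R) (m : nat) : Prop :=
  exists (O : nat -> lmodType R) (f1 : {linear Z -> O 0%N})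
         (f : forall i, {linear O i -> O i.+1}),
    [/\ approx_complex W f1 f,
        injective f1,
        ((1 < m)%N -> exact_at f1 (f 0%N)) &
        (forall i, (i.+3 <= m)%N -> exact_at (f i) (f i.+1))].

Definition lapp_inf (R : pzRingType) (W Z : lmodType R) : Prop :=
  exists (O : nat -> lmodType R) (f1 : {linear Z -> O 0%N})
         (f : forall i, {linear O i -> O i.+1}),
    [/\ approx_complex W f1 f,
        injective f1,
        exact_at f1 (f 0%N) &
        (forall i, exact_at (f i) (f i.+1))].

(* Main.v *)
Require Import Defs.
From HB Require Import structures.
From mathcomp Require Import all_boot all_order all_algebra.
From Stdlib Require Import ClassicalEpsilon Classical.
Set Implicit Arguments. Unset Strict Implicit. Unset Printing Implicit Defensive.
Import GRing.Theory.
Local Open Scope ring_scope.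

Section Main.
Variable R : pzRingType.
Variable W : lmodType R.

Definition mkLin (U V : lmodType R) (f : U -> V) (H : linear f) : {linear U -> V} :=
  HB.pack f (GRing.isLinear.Build R U V _ f H).
Arguments mkLin {U V} f H.
Lemma mkLinE U V f H x : @mkLin U V f H x = f x. Proof. by []. Qed.

Definition lcomp (U V X : lmodType R) (g : {linear V -> X}) (f : {linear U -> V}) :
  {linear U -> X} := mkLin (fun x => g (f x)) (fun a u v => ltac:(by rewrite /= !linearP)).
Lemma lcompE U V X g f x : @lcomp U V X g f x = g (f x). Proof. by []. Qed.

Definition l0 (U V : lmodType R) : {linear U -> V} :=
  mkLin (fun _ => 0) (fun a u v => ltac:(by rewrite /= scaler0 addr0)).
Lemma l0E U V x : @l0 U V x = 0. Proof. by []. Qed.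

Lemma pairP (A B : lmodType R) (v w : (A * B)%type) : v.1 = w.1 -> v.2 = w.2 -> v = w.
Proof. by case: v w => ? ? [? ?] /= -> ->. Qed.

Definition Z0 : lmodType R := {ffun 'I_0 -> W}.
Lemma z0 (x : Z0) : x = 0. Proof. by apply/ffunP => -[]. Qed.

Lemma in_add_Z0 : in_add W Z0.
Proof. by exists 0%N, (l0 _ _), (l0 _ _) => x; rewrite (z0 x). Qed.

Lemma ffD n (u v : {ffun 'I_n -> W}) k : (u + v) k = u k + v k.
Proof. by rewrite ffunE. Qed.
Lemma ffZ n (u : {ffun 'I_n -> W}) a k : (a *: u) k = a *: u k.
Proof. by rewrite ffunE. Qed.

Lemma in_add_prod (A B : lmodType R) : in_add W A -> in_add W B -> in_add W (A * B)%type.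
Proof.
move=> [n [s [p Hp]]] [n' [s' [p' Hp']]].
pose sf (v : (A * B)%type) : {ffun 'I_(n + n') -> W} :=
  [ffun k => match split k with inl i => s v.1 i | inr j => s' v.2 j end].
have sl : linear sf.
  move=> a u v; apply/ffunP => k; rewrite ffD ffZ !ffunE.
  by case: (split k) => i; rewrite linearP ffD ffZ.
pose pf (u : {ffun 'I_(n + n') -> W}) : (A * B)%type :=
  (p [ffun i => u (lshift n' i)], p' [ffun j => u (rshift n j)]).
have pl : linear pf.
  move=> a u v; apply: pairP => /=.
    rewrite -linearP; congr (p _); apply/ffunP => i; by rewrite !ffunE.
  rewrite -linearP; congr (p' _); apply/ffunP => i; by rewrite !ffunE .
exists (n + n')%N, (mkLin sf sl), (mkLin pf pl) => v; apply: pairP => /=.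
  rewrite -[RHS]Hp; congr (p _); apply/ffunP => i; rewrite !ffunE.
  by rewrite (unsplitK (inl i)).
rewrite -[RHS]Hp'; congr (p' _); apply/ffunP => i; rewrite !ffunE.
by rewrite (unsplitK (inr i)).
Qed.

Definition submod (V : lmodType R) (P : V -> Prop) :=
  [/\ P 0, (forall x y, P x -> P y -> P (x + y)) & (forall a x, P x -> P (a *: x))].

Lemma submodB V P x y : @submod V P -> P x -> P y -> P (x - y).
Proof. by case=> _ HD HZ Px Py; apply: HD => //; rewrite -scaleN1r; apply: HZ. Qed.

Definition imgP (V O : lmodType R) (P : V -> Prop) (e : V -> O) : O -> Prop :=
  fun y => exists z, P z /\ y = e z.

Lemma approx_ext (O : lmodType R) (P Q : O -> Prop) :
  (forall y, P y <-> Q y) -> incl_left_approx W P -> incl_left_approx W Q.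
Proof.
move=> PQ HP X HX g gD gZ.
have [h Hh] := HP X HX g (fun x y Px Py => gD x y (proj1 (PQ x) Px) (proj1 (PQ y) Py))
                 (fun r x Px => gZ r x (proj1 (PQ x) Px)).
by exists h => x /PQ /Hh.
Qed.

Lemma lift_ap (V O X : lmodType R) (P : V -> Prop) (e : {linear V -> O}) :
  submod P -> incl_left_approx W (imgP P e) -> in_add W X ->
  forall u : V -> X, (forall x y, P x -> P y -> u (x + y) = u x + u y) ->
  (forall a x, P x -> u (a *: x) = a *: u x) ->
  (forall y, P y -> e y = 0 -> u y = 0) ->
  exists h : {linear O -> X}, forall y, P y -> h (e y) = u y.
Proof.
move=> sP ap HX u uD uZ uK.
pose pick (z : O) := epsilon (inhabits (0 : V)) (fun y => P y /\ z = e y).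
have pickP z : imgP P e z -> P (pick z) /\ z = e (pick z).
  by move=> [y Hy]; apply: (epsilon_spec (inhabits (0 : V)) (fun y => P y /\ z = e y)); exists y.
have key y y' : P y -> P y' -> e y = e y' -> u y = u y'.
  move=> Py Py' E.
  have D : P (y - y') by apply: submodB.
  have : u (y - y') = 0 by apply: uK => //; rewrite linearB E subrr.
  move=> H0; have -> : y = y' + (y - y') by rewrite addrC subrK.
  by rewrite uD // H0 addr0.
have [h Hh] : exists h : {linear O -> X}, forall y, imgP P e y -> h y = u (pick y).
  apply: (ap X HX (fun z => u (pick z))).
- move=> z1 z2 H1 H2.
  have H12 : imgP P e (z1 + z2).
    case: H1 => y1 [P1 ->]; case: H2 => y2 [P2 ->].
    by exists (y1 + y2); split; [case: sP => _ HD _; apply: HD | rewrite linearD].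
  case: (pickP _ H1) => Q1 E1; case: (pickP _ H2) => Q2 E2; case: (pickP _ H12) => Q3 E3.
  rewrite -uD //; apply: key => //; first by case: sP => _ HD _; apply: HD.
  by rewrite -E3 linearD -E1 -E2.
- move=> a z H1.
  have Ha : imgP P e (a *: z).
    by case: H1 => y1 [P1 ->]; exists (a *: y1); split; [case: sP => _ _ HZ; apply: HZ | rewrite linearZ].
  case: (pickP _ H1) => Q1 E1; case: (pickP _ Ha) => Q3 E3.
  rewrite -uZ //; apply: key => //; first by case: sP => _ _ HZ; apply: HZ.
  by rewrite -E3 linearZ -E1.
exists h => y Py.
have Hy : imgP P e (e y) by exists y.
rewrite Hh //; case: (pickP _ Hy) => Q E; apply: key => //.
Qed.


Unset Implicit Arguments.
Record good (Ex : nat -> Prop) {V : lmodType R} (P : V -> Prop) {O : nat -> lmodType R}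
  (e : {linear V -> O 0%N}) (f : forall i, {linear O i -> O i.+1}) : Prop := Good {
  g_add : forall i, in_add W (O i);
  g_c0 : forall z, P z -> f 0%N (e z) = 0;
  g_cc : forall i x, f i.+1 (f i x) = 0;
  g_ap0 : incl_left_approx W (imgP P e);
  g_ap : forall i, incl_left_approx W (img (f i));
  g_inj : forall z, P z -> e z = 0 -> z = 0;
  g_ex0 : Ex 0%N -> forall y, f 0%N y = 0 -> imgP P e y;
  g_ex : forall i, Ex i.+1 -> exact_at (f i) (f i.+1) }.

Record stp {VX VY : lmodType R} (X : VX -> Prop) (Y : VY -> Prop)
  (sm : {linear VX -> VY}) (rm : {linear VY -> VX}) : Prop := Stp {
  t_X : submod X;
  t_Y : submod Y;
  t_s : forall x, X x -> Y (sm x);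
  t_r : forall y, Y y -> X (rm y);
  t_rs : forall x, X x -> rm (sm x) = x }.
Arguments t_X {_ _ _ _ _ _}. Arguments t_Y {_ _ _ _ _ _}. Arguments t_s {_ _ _ _ _ _} _ {x}.
Arguments t_r {_ _ _ _ _ _} _ {y}. Arguments t_rs {_ _ _ _ _ _} _ {x}.
Arguments g_add {_ _ _ _ _ _}. Arguments g_c0 {_ _ _ _ _ _} _ {z}. Arguments g_cc {_ _ _ _ _ _}.
Arguments g_ap0 {_ _ _ _ _ _}. Arguments g_ap {_ _ _ _ _ _}. Arguments g_inj {_ _ _ _ _ _} _ {z}.
Arguments g_ex0 {_ _ _ _ _ _} _ _ {y}. Arguments g_ex {_ _ _ _ _ _}.

Record st := St {
  VX : lmodType R; XP : VX -> Prop;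
  VY : lmodType R; YP : VY -> Prop;
  sm : {linear VX -> VY}; rm : {linear VY -> VX};
  Ex : nat -> Prop;
  OO : nat -> lmodType R;
  ee : {linear VY -> OO 0%N};
  ff : forall i, {linear OO i -> OO i.+1};
  s_ok : stp XP YP sm rm;
  s_good : good Ex YP ee ff }.
Arguments VX : clear implicits. Arguments XP : clear implicits.
Arguments VY : clear implicits. Arguments YP : clear implicits.
Arguments sm : clear implicits. Arguments rm : clear implicits.
Arguments Ex : clear implicits. Arguments OO : clear implicits.
Arguments ee : clear implicits. Arguments ff : clear implicits.
Arguments s_ok : clear implicits. Arguments s_good : clear implicits.

Lemma inj_sum (S : st) x : XP S x -> ee S (sm S x) = 0 -> x = 0.
Proof.
move=> Xx E; have Ys := t_s (s_ok S) Xx.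
have := g_inj (s_good S) Ys E => E0.
by rewrite -(t_rs (s_ok S) Xx) E0 linear0.
Qed.

Lemma g0 (X : lmodType R) (V : lmodType R) (P : V -> Prop) (g : V -> X) :
  P 0 -> (forall x y, P x -> P y -> g (x + y) = g x + g y) -> g 0 = 0.
Proof.
move=> P0 gD; have := gD 0 0 P0 P0; rewrite addr0 => E.
by apply: (@addrI _ (g 0)); rewrite addr0 -E.
Qed.

Lemma approx_sum (S : st) : incl_left_approx W (imgP (XP S) (lcomp (ee S) (sm S))).
Proof.
case: S => VX X VY Y sm rm Ex O e f ok gd /=.
move=> Z HZ g gD gZ.
have sX := t_X ok; have sY := t_Y ok.
have imgX x : X x -> imgP X (lcomp e sm) (e (sm x)) by move=> Xx; exists x.
have Hg0 : g 0 = 0.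
  apply: (@g0 _ _ (imgP X (lcomp e sm))) => //; exists 0; split; first by case: sX.
  by rewrite linear0.
have [h Hh] : exists h : {linear O 0%N -> Z}, forall y, Y y -> h (e y) = g (e (sm (rm y))).
  apply: (lift_ap sY (g_ap0 gd) HZ).
- move=> x y Yx Yy; rewrite !linearD gD //; by apply: imgX; apply: (t_r ok).
- move=> a x Yx; rewrite !linearZ gZ //.
  by apply: imgX; apply: (t_r ok).
- move=> y Yy E; have -> := g_inj gd Yy E; by rewrite !linear0.
exists h => _ [x [Xx ->]]; rewrite /= Hh; last by apply: (t_s ok).
by rewrite (t_rs ok).
Qed.


Lemma fstL (A B : lmodType R) a (u v : (A * B)%type) : (a *: u + v).1 = a *: u.1 + v.1.
Proof. by []. Qed.
Lemma sndL (A B : lmodType R) a (u v : (A * B)%type) : (a *: u + v).2 = a *: u.2 + v.2.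
Proof. by []. Qed.
Lemma fstD (A B : lmodType R) (u v : (A * B)%type) : (u + v).1 = u.1 + v.1.
Proof. by []. Qed.
Lemma sndD (A B : lmodType R) (u v : (A * B)%type) : (u + v).2 = u.2 + v.2.
Proof. by []. Qed.
Lemma fstZ (A B : lmodType R) a (u : (A * B)%type) : (a *: u).1 = a *: u.1.
Proof. by []. Qed.
Lemma sndZ (A B : lmodType R) a (u : (A * B)%type) : (a *: u).2 = a *: u.2.
Proof. by []. Qed.
Lemma fstN (A B : lmodType R) (u : (A * B)%type) : (- u).1 = - u.1.
Proof. by []. Qed.
Lemma sndN (A B : lmodType R) (u : (A * B)%type) : (- u).2 = - u.2.
Proof. by []. Qed.
Lemma fst0 (A B : lmodType R) : (0 : (A * B)%type).1 = 0.
Proof. by []. Qed.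
Lemma snd0 (A B : lmodType R) : (0 : (A * B)%type).2 = 0.
Proof. by []. Qed.

Definition Vn (S : st) : lmodType R := (OO S 1%N * OO S 0%N)%type.
Definition Y2 (S : st) (v : Vn S) : Prop := exists z, v.1 = ff S 0%N z.
Arguments Y2 : clear implicits.

Lemma submod_img (U V : lmodType R) (d : {linear U -> V}) : submod (fun v => exists z, v = d z).
Proof.
split; first by exists 0; rewrite linear0.
- by move=> _ _ [x ->] [y ->]; exists (x + y); rewrite linearD.
- by move=> a _ [x ->]; exists (a *: x); rewrite linearZ.
Qed.

Lemma submod_Y2 S : submod (Y2 S).
Proof.
split; first by exists 0; rewrite linear0.
- by move=> u v [x Ex] [y Ey]; exists (x + y); rewrite linearD -Ex -Ey.
- by move=> a u [x Ex]; exists (a *: x); rewrite !linearZ /= -Ex.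
Qed.

Lemma submodT (V : lmodType R) : submod (fun _ : V => True).
Proof. by []. Qed.

Lemma img_imgP (A B : lmodType R) (f : A -> B) y : img f y <-> imgP (fun _ => True) f y.
Proof. by split=> [[x ->]|[x [_ ->]]]; exists x. Qed.

Record stepP (S : st) (d0 : {linear OO S 0%N -> Vn S}) (Om : Vn S -> Prop)
  (s2 r2 : {linear Vn S -> Vn S}) : Prop := StepP {
  sp_a : forall x, XP S x -> d0 (ee S (sm S x)) = 0;
  sp_b : forall v, Om v <-> exists z, v = d0 z;
  sp_c : Ex S 0%N -> forall z, d0 z = 0 -> exists x, XP S x /\ z = ee S (sm S x);
  sp_d : stp Om (Y2 S) s2 r2 }.
Arguments stepP : clear implicits.

Lemma step_ex S : exists t : {linear OO S 0%N -> Vn S} * (Vn S -> Prop) *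
    {linear Vn S -> Vn S} * {linear Vn S -> Vn S},
  stepP S t.1.1.1 t.1.1.2 t.1.2 t.2.
Proof.
have ok := s_ok S; have gd := s_good S.
case: (classic (Ex S 0%N)) => E0; last first.
  exists (l0 _ _, (fun v => v = 0), l0 _ _, l0 _ _); split => //=.
  - by move=> v; split=> [->|[z ->]]; [exists 0|].
  - split => //=.
    + by split=> // [x y -> ->|a x ->]; rewrite ?addr0 ?scaler0.
    + exact: submod_Y2.
    + by move=> x _; exists 0; rewrite linear0.
have [om Hom] : exists om : {linear OO S 0%N -> OO S 0%N},
    forall y, YP S y -> om (ee S y) = ee S (sm S (rm S y)).
  apply: (lift_ap (t_Y ok) (g_ap0 gd) (g_add gd 0%N)).
  - by move=> x y _ _; rewrite !linearD.
  - by move=> a x _; rewrite !linearZ.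
  - by move=> y Yy E; rewrite (g_inj gd Yy E) !linear0.
pose d0f (y : OO S 0%N) : Vn S := (ff S 0%N y, y - om y).
have d0l : linear d0f.
  move=> a u v; apply: pairP; rewrite ?fstL ?sndL /=; first by rewrite linearP.
  by rewrite linearP opprD addrACA scalerBr.
pose d0 := mkLin d0f d0l.
have d0X x : XP S x -> d0 (ee S (sm S x)) = 0.
  move=> Xx; apply: pairP => /=; first by rewrite (g_c0 gd (t_s ok Xx)).
  by rewrite Hom ?(t_rs ok Xx) ?subrr //; apply: (t_s ok).
have [mu Hmu] : exists mu : {linear OO S 1%N -> Vn S},
    forall z, True -> mu (ff S 0%N z) = d0 (om z).
  apply: (lift_ap (submodT _)).
  - have H := g_ap gd 0%N; move: H; apply: approx_ext => y; exact: img_imgP.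
  - by apply: in_add_prod; apply: (g_add gd).
  - by move=> x y _ _; rewrite !linearD.
  - by move=> a x _; rewrite !linearZ.
  - move=> z _ E; have [y [Yy ->]] := g_ex0 gd E0 E.
    by rewrite Hom // d0X //; apply: (t_r ok).
have s2l : linear (fun v : Vn S => (- v.1, v.2) : Vn S).
  by move=> a u v; apply: pairP; rewrite fstL sndL /= // scalerN opprD.
have r2l : linear (fun v : Vn S => d0 v.2 - mu v.1).
  by move=> a u v; rewrite !linearP /= scalerN scalerBr addrACA.
exists (d0, (fun v => exists z, v = d0 z), mkLin _ s2l, mkLin _ r2l); split => /=.
- exact: d0X.
- by [].
- move=> _ z E.
  have E1 : ff S 0%N z = 0 by have := congr1 fst E.
  have E2 : z - om z = 0 by have := congr1 snd E.
  have [y [Yy Ez]] := g_ex0 gd E0 E1.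
  move: E2; rewrite Ez Hom // -linearB => E3.
  have Yd : YP S (y - sm S (rm S y)).
    by apply: (submodB (t_Y ok) Yy); apply: (t_s ok); apply: (t_r ok).
  have := g_inj gd Yd E3; move/eqP; rewrite subr_eq0 => /eqP Ey.
  by exists (rm S y); split; [apply: (t_r ok) | rewrite -Ey].
- split => /=.
  + exact (submod_img _ _ d0).
  + exact: submod_Y2.
  + by move=> _ [z ->]; exists (- z); rewrite linearN.
  + move=> v [z Hz]; exists (v.2 - om z).
    change (d0 v.2 - mu v.1 = d0 (v.2 - om z)).
    by rewrite Hz Hmu // linearB.
  + move=> _ [z ->].
    change (d0 (z - om z) - mu (- ff S 0%N z) = d0 z).
    rewrite linearN Hmu // opprK.
    by rewrite -linearD subrK.
Qed.


Definition Zm (S : st) (i : nat) : lmodType R :=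
  match i with 0%N => OO S 0%N | _.+1 => Z0 end.
Definition On (S : st) (i : nat) : lmodType R := (OO S i.+1 * Zm S i)%type.

Lemma en_lin (S : st) : linear (fun v : Vn S => (v : On S 0%N)).
Proof. by []. Qed.
Definition en (S : st) : {linear Vn S -> On S 0%N} := mkLin _ (en_lin S).

Lemma fn_lin (S : st) i : linear (fun v : On S i => (ff S i.+1 v.1, 0) : On S i.+1).
Proof. by move=> a u v; apply: pairP; rewrite /= ?linearP // scaler0 addr0. Qed.
Definition fn (S : st) i : {linear On S i -> On S i.+1} := mkLin _ (fn_lin S i).

Lemma good_next (S : st) : good (fun i => Ex S i.+1) (Y2 S) (en S) (fn S).
Proof.
have gd := s_good S.
split.
- move=> i; apply: in_add_prod; first exact: (g_add gd).
  by case: i => [|i] /=; [apply: (g_add gd) | apply: in_add_Z0].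
- move=> v [z Hz]; apply: pairP => //=.
  by rewrite Hz (g_cc gd).
- move=> i x; apply: pairP => //=.
  by rewrite (g_cc gd).
- move=> X HX g gD gZ.
  have Y2in (v : Vn S) : Y2 S v -> imgP (Y2 S) (en S) v by move=> Hv; exists v.
  have Y20 c : Y2 S ((0, c) : Vn S) by exists 0; rewrite linear0.
  have Y21 z : Y2 S ((ff S 0%N z, 0) : Vn S) by exists z.
  have [h1 Hh1] : exists h1 : {linear OO S 1%N -> X},
      forall y, img (ff S 0%N) y -> h1 y = g ((y, 0) : Vn S).
    apply: (g_ap gd 0%N X HX).
  + move=> _ _ [x ->] [y ->]; rewrite -gD ?linearD; try by apply: Y2in.
    by congr g; apply: pairP; rewrite //= addr0.
  + move=> a _ [x ->]; rewrite -gZ; last by apply: Y2in.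
    by congr g; apply: pairP; rewrite //= ?linearZ ?scaler0.
  have hl : linear (fun v : On S 0%N => h1 v.1 + g ((0, v.2) : Vn S)).
    move=> a u v /=; rewrite linearP.
    have -> : ((0, a *: u.2 + v.2) : Vn S) = a *: ((0, u.2) : Vn S) + (0, v.2).
      by apply: pairP; rewrite //= scaler0 addr0.
    rewrite gD ?gZ; try by apply: Y2in.
    + by rewrite scalerDr addrACA.
    + by apply: Y2in; case: (submod_Y2 S) => _ _ HZ; apply: HZ.
  exists (mkLin _ hl) => _ [v [Hv ->]] /=.
  case: Hv => z Hz.
  rewrite Hz Hh1; last by exists z.
  rewrite -gD; try by apply: Y2in.
  by congr g; apply: pairP; rewrite //= ?addr0 ?add0r.
- move=> i X HX g gD gZ.
  have imgin x : img (fn S i) ((ff S i.+1 x, 0) : On S i.+1).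
    by exists ((x, 0) : On S i).
  have [h1 Hh1] : exists h1 : {linear OO S i.+2 -> X},
      forall y, img (ff S i.+1) y -> h1 y = g ((y, 0) : On S i.+1).
    apply: (g_ap gd i.+1 X HX).
  + move=> _ _ [x ->] [y ->]; rewrite -gD; try by apply: imgin.
    by congr g; apply: pairP; rewrite //= ?linearD ?addr0.
  + move=> a _ [x ->]; rewrite -gZ; last by apply: imgin.
    by congr g; apply: pairP; rewrite //= ?linearZ ?scaler0.
  have hl : linear (fun v : On S i.+1 => h1 v.1).
    by move=> a u v; rewrite /= linearP.
  exists (mkLin _ hl) => _ [v ->] /=.
  by rewrite Hh1 //; exists v.1.
- by move=> z _ E.
- move=> E1 y Hy.
  have Hy1 : ff S 1%N y.1 = 0 by have := congr1 fst Hy.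
  have [z Hz] := g_ex gd 0%N E1 y.1 Hy1.
  by exists y; split => //; exists z.
- move=> i Ei y Hy.
  have Hy1 : ff S i.+2 y.1 = 0 by have := congr1 fst Hy.
  have [z Hz] := g_ex gd i.+1 Ei y.1 Hy1.
  exists ((z, 0) : On S i); apply: pairP => //=.
  exact: z0.
Qed.


Arguments sp_a {_ _ _ _ _}. Arguments sp_b {_ _ _ _ _}.
Arguments sp_c {_ _ _ _ _}. Arguments sp_d {_ _ _ _ _}.

Definition step (S : st) := proj1_sig (constructive_indefinite_description _ (step_ex S)).
Lemma stepP_ok S : stepP S (step S).1.1.1 (step S).1.1.2 (step S).1.2 (step S).2.
Proof. exact: (proj2_sig (constructive_indefinite_description _ (step_ex S))). Qed.

Definition next (S : st) : st :=
  St (Vn S) (step S).1.1.2 (Vn S) (Y2 S) (step S).1.2 (step S).2 (fun i => Ex S i.+1)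
     (On S) (en S) (fn S) (sp_d (stepP_ok S)) (good_next S).

Definition d0 (S : st) : {linear OO S 0%N -> Vn S} := (step S).1.1.1.
Definition es (S : st) : {linear VX S -> OO S 0%N} := lcomp (ee S) (sm S).

Lemma ex0 (S : st) : Ex S 0%N -> forall y, es (next S) (d0 S y) = 0 ->
  exists x, XP S x /\ y = es S x.
Proof.
move=> E0 y Hy.
have X1 : XP (next S) (d0 S y) by apply/(sp_b (stepP_ok S)); exists y.
have := inj_sum _ _ X1 Hy => D.
exact: (sp_c (stepP_ok S) E0 y D).
Qed.

Lemma cc0 (S : st) x : XP S x -> d0 S (es S x) = 0.
Proof. exact: (sp_a (stepP_ok S)). Qed.

Section Asm.
Variable S0 : st.
Definition Sk k := iter k next S0.
Definition Of k := OO (Sk k) 0%N.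
Definition ef : {linear VX S0 -> Of 0} := es S0.
Definition fk k : {linear Of k -> Of k.+1} :=
  @lcomp _ (Vn (Sk k)) _ (es (Sk k.+1)) (d0 (Sk k)).

Lemma Ex_Sk k i : Ex (Sk k) i <-> Ex S0 (k + i).
Proof.
elim: k i => [|k IH] i; first by [].
by rewrite addSnnS; apply: (IH i.+1).
Qed.

Lemma assemble : good (Ex S0) (XP S0) ef fk.
Proof.
split.
- by move=> k; apply: (g_add (s_good (Sk k)) 0%N).
- move=> z Xz; rewrite /fk lcompE.
  have -> : d0 (Sk 0) (ef z) = 0 by apply: cc0.
  by rewrite linear0.
- move=> k x; rewrite /fk !lcompE.
  have X1 : XP (Sk k.+1) (d0 (Sk k) x) by apply/(sp_b (stepP_ok (Sk k))); exists x.
  have -> : d0 (Sk k.+1) (es (Sk k.+1) (d0 (Sk k) x)) = 0 by apply: cc0.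
  by rewrite linear0.
- exact: approx_sum.
- move=> k; apply: (approx_ext _ (approx_sum (Sk k.+1))) => y; split.
  + move=> [x [Xx ->]]; have [z Hz] := proj1 (sp_b (stepP_ok (Sk k)) x) Xx.
    by exists z; rewrite /fk lcompE Hz.
  + move=> [z ->]; exists (d0 (Sk k) z); split; last by [].
    by apply/(sp_b (stepP_ok (Sk k))); exists z.
- by move=> z Xz E; apply: (inj_sum _ _ Xz E).
- move=> E0 y Hy.
  have [x [Xx ->]] := ex0 _ E0 _ Hy.
  by exists x.
- move=> k Ek y Hy.
  have E0 : Ex (Sk k.+1) 0%N by apply/Ex_Sk; rewrite addn0.
  have [x [Xx ->]] := ex0 _ E0 _ Hy.
  have [z Hz] := proj1 (sp_b (stepP_ok (Sk k)) x) Xx.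
  by exists z; rewrite /fk lcompE Hz.
Qed.
End Asm.


Lemma init_good (Ex : nat -> Prop) (V : lmodType R)
  (O : nat -> lmodType R) (e : {linear V -> O 0%N}) (f : forall i, {linear O i -> O i.+1}) :
  approx_complex W e f -> injective e -> (Ex 0%N -> exact_at e (f 0%N)) ->
  (forall i, Ex i.+1 -> exact_at (f i) (f i.+1)) -> good Ex (fun _ => True) e f.
Proof.
move=> [H1 H2 H3 H4 H5] Hi E0 E; split => //.
- apply: approx_ext H4 => y; exact: img_imgP.
- by move=> z _ Ez; apply: Hi; rewrite Ez linear0.
- by move=> /E0 H y /H [x ->]; exists x.
Qed.

Lemma good_final (Ex : nat -> Prop) (V : lmodType R)
  (O : nat -> lmodType R) (e : {linear V -> O 0%N}) (f : forall i, {linear O i -> O i.+1}) :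
  good Ex (fun _ => True) e f ->
  [/\ approx_complex W e f, injective e, (Ex 0%N -> exact_at e (f 0%N)) &
  (forall i, Ex i.+1 -> exact_at (f i) (f i.+1))].
Proof.
move=> [H1 H2 H3 H4 H5 H6 H7 H8]; split => //.
- split => //; first by move=> z; apply: H2.
  apply: approx_ext H4 => y; split; [by case=> x [_ ->]; exists x | by case=> x ->; exists x].
- move=> x y Exy; apply/eqP; rewrite -subr_eq0; apply/eqP; apply: H6 => //.
  by rewrite linearB Exy subrr.
- by move=> /H7 H y /H [x [_ ->]]; exists x.
Qed.

Lemma reduce (M1 M2 : lmodType R) (Ex : nat -> Prop) :
  (exists (O : nat -> lmodType R) (f1 : {linear (M1 * M2)%type -> O 0%N})
         (f : forall i, {linear O i -> O i.+1}),
    [/\ approx_complex W f1 f, injective f1, (Ex 0%N -> exact_at f1 (f 0%N)) &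
        (forall i, Ex i.+1 -> exact_at (f i) (f i.+1))]) ->
  (exists (O : nat -> lmodType R) (f1 : {linear M1 -> O 0%N})
         (f : forall i, {linear O i -> O i.+1}),
    [/\ approx_complex W f1 f, injective f1, (Ex 0%N -> exact_at f1 (f 0%N)) &
        (forall i, Ex i.+1 -> exact_at (f i) (f i.+1))]).
Proof.
move=> [O [f1 [f [Hac Hinj H0 H1]]]].
have inl_l : linear (fun x : M1 => (x, 0) : (M1 * M2)%type).
  by move=> a u v; apply: pairP; rewrite //= scaler0 addr0.
have fst_l : linear (fun v : (M1 * M2)%type => v.1).
  by [].
have ok : stp (fun _ : M1 => True) (fun _ : (M1 * M2)%type => True) (mkLin _ inl_l) (mkLin _ fst_l).
  by split => //; apply: submodT.
pose S0 := St M1 (fun _ => True) (M1 * M2)%type (fun _ => True) (mkLin _ inl_l) (mkLin _ fst_l)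
  Ex O f1 f ok (@init_good Ex _ O f1 f Hac Hinj H0 H1).
have G := assemble S0.
have [A B C D] := @good_final _ _ _ (ef S0) (fk S0) G.
by exists (Of S0), (ef S0), (fk S0).
Qed.

End Main.

Local Close Scope ring_scope.

Theorem lemma2p1 (R : pzRingType) (W M1 M2 : lmodType R) :
  artin_algebra R -> fin_gen W -> fin_gen M1 -> fin_gen M2 ->
  (forall m : nat, (0 < m)%N ->
     lapp_ge W (M1 * M2)%type m -> lapp_ge W M1 m) /\
  (lapp_inf W (M1 * M2)%type -> lapp_inf W M1).
Proof.
move=> _ _ _ _; split.
- move=> m _ H.
  have := @reduce R W M1 M2 (fun i => (i.+2 <= m)%N).
  move: H => [O [f1 [f [A B C D]]]].
  case.
    by exists O, f1, f; split.
  move=> O' [f1' [f' [A' B' C' D']]].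
  by exists O', f1', f'; split.
- move=> [O [f1 [f [A B C D]]]].
  have := @reduce R W M1 M2 (fun _ => True).
  case.
    by exists O, f1, f; split => // _.
  move=> O' [f1' [f' [A' B' C' D']]].
  by exists O', f1', f'; split => //; [apply: C' | move=> i; apply: D'].
Qed.
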